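(* Consider a unit-demand buyer with value distribution $\mathcal{D}$ over $m$ items, a deterministic item pricing $p\in\mathbb{R}_+^m$, and a random set $S\subseteq[m]$ of available items (independent of the buyer's value). Let $x^*=\mathbb{E}_S[\mathbf{x}_{p,S}]$. Then for every $y\in\Delta_m$ with $y\preceq x^*$ there exists a random item pricing $q$ (independent of $S$ and of the buyer's value) such that $$\mathbb{E}_{q,S}[\mathbf{x}_{q,S}]=y\quad\text{and}\quad \mathbb{E}_{q,S}[\textsc{Rev}_{q,S}]=y\cdot p.$$
   Context: Unit-demand buyer: valuation $v$ with $v_j\ge0$ per item, $v(S)=\max_{j\in S}v_j$; $\mathcal{D}$ arbitrary. $\Delta_m=\{\lambda\in[0,1]^m:\sum_j\lambda_j\le1\}$. An item pricing is a vector $p\in(\mathbb{R}_+\cup\{\infty\})^m$; when the set of available items is $S$, the buyer purchases an item $j\in S$ maximizing $v_j-p_j$ if this maximum is nonnegative (otherwise nothing) and pays $p_j$. $\mathbf{x}_{p,S}\in\Delta_m$ is the vector whose $j$-th entry is the probability over $v\sim\mathcal{D}$ that item $j$ is purchased under pricing $p$ with available set $S$, and $\textsc{Rev}_{p,S}$ the corresponding expected payment. A random item pricing is a distribution over item pricings; expectations are also taken over its randomness. $y\preceq x$ means $y_j\le x_j$ for all $j$. *)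

(* Defs.v *)
From HB Require Import structures.
From mathcomp Require Import all_boot all_order all_algebra.
From mathcomp Require Import all_classical all_reals all_analysis.
Set Implicit Arguments. Unset Strict Implicit. Unset Printing Implicit Defensive.
Import Order.TTheory GRing.Theory Num.Theory.
Local Open Scope classical_set_scope.
Local Open Scope ring_scope.

(* An item pricing on m items: a price in [0, +oo] (as an extended real)
   for each item; +oo means "effectively unavailable". *)
Definition pricing (R : realType) (m : nat) := 'I_m -> \bar R.

Definition is_pricing (R : realType) (m : nat) (p : pricing R m) : Prop :=
  forall j, (0 <= p j)%E.

(* Unit-demand buyer with valuation v, item pricing p, available set S:
   the buyer buys item j iff j is available, its utility v_j - p_j is
   nonnegative and maximal among available items; ties are broken in
   favour of the smallest index (fixed deterministic tie-breaking rule). *)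
Definition buys (R : realType) (m : nat) (v : 'I_m -> R) (p : pricing R m)
    (S : {set 'I_m}) (j : 'I_m) : bool :=
  [&& j \in S,
      (0 <= (v j)%:E - p j)%E,
      [forall k in S, ((v k)%:E - p k <= (v j)%:E - p j)%E] &
      [forall k in S, (k < j)%N ==> ((v k)%:E - p k < (v j)%:E - p j)%E]].

(* x_{p,S}: purchase probability of item j, the buyer's valuation being the
   random variable v on the probability space (Omega, P) (its law is D). *)
Definition xprob (R : realType) (d : measure_display) (Omega : measurableType d)
    (P : probability Omega R) (m : nat) (v : Omega -> 'I_m -> R)
    (p : pricing R m) (S : {set 'I_m}) (j : 'I_m) : R :=
  fine (P [set w | buys (v w) p S j]).

Definition payment (R : realType) (m : nat) (vw : 'I_m -> R) (p : pricing R m)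
    (S : {set 'I_m}) : R :=
  \sum_(j < m) (if buys vw p S j then fine (p j) else 0).

Definition Rev (R : realType) (d : measure_display) (Omega : measurableType d)
    (P : probability Omega R) (m : nat) (v : Omega -> 'I_m -> R)
    (p : pricing R m) (S : {set 'I_m}) : R :=
  fine (\int[P]_w (payment (v w) p S)%:E)%E.

(* Main.v *)
Require Import Defs.
From HB Require Import structures.
From mathcomp Require Import all_boot all_order all_algebra.
From mathcomp Require Import all_classical all_reals all_analysis.
From mathcomp Require Import measurable_realfun.
From mathcomp Require Import ring lra.
Set Implicit Arguments. Unset Strict Implicit. Unset Printing Implicit Defensive.
Import Order.TTheory GRing.Theory Num.Theory.
Local Open Scope classical_set_scope.
Local Open Scope ring_scope.

Definition pT (R : realType) m (p : 'I_m -> R) (T : {set 'I_m}) : pricing R m :=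
  fun i => if i \in T then (p i)%:E else +oo%E.

Lemma buys_in (R : realType) m (p : 'I_m -> R) T (vw : 'I_m -> R) S j :
  buys vw (pT p T) S j -> j \in T.
Proof.
by case/and4P => _ h _ _; move: h; rewrite /pT; case: ifP.
Qed.

Lemma buys_mono (R : realType) m (p : 'I_m -> R) (T T' : {set 'I_m}) (vw : 'I_m -> R) S j :
  T \subset T' -> j \in T -> buys vw (pT p T') S j -> buys vw (pT p T) S j.
Proof.
move=> sub jT; have jT' := fintype.subsetP sub j jT.
case/and4P => jS h0 h1 h2; apply/and4P; split => //.
- by move: h0; rewrite /pT jT jT'.
- apply/forall_inP => k kS; have := forall_inP h1 k kS; rewrite /pT jT jT'.
  case: (boolP (k \in T)) => kT; first by rewrite (fintype.subsetP sub k kT).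
  by move=> _; rewrite /= leNye.
- apply/forall_inP => k kS; have := forall_inP h2 k kS; rewrite /pT jT jT'.
  case: (boolP (k \in T)) => kT; first by rewrite (fintype.subsetP sub k kT).
  by move=> _; rewrite /= -EFinB ltNyr implybT.
Qed.
Lemma meas_all d (Omega : measurableType d) (I : Type) (P : I -> Omega -> bool)
  (mP : forall k, measurable_fun setT (P k)) (s : seq I) :
  measurable_fun setT (fun w => all (fun k => P k w) s).
Proof.
elim: s => [|a s IH] /=; first exact: measurable_cst.
exact: measurable_and.
Qed.

Lemma meas_forall d (Omega : measurableType d) m (S : {set 'I_m})
  (P : 'I_m -> Omega -> bool)
  (mP : forall k, measurable_fun setT (P k)) :
  measurable_fun setT (fun w => [forall k in S, P k w]).
Proof.
have -> : (fun w => [forall k in S, P k w]) = (fun w => all (fun k => P k w) (enum S)).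
  apply: funext => w; apply/idP/idP => [/forall_inP H|/allP H].
    by apply/allP => k; rewrite mem_enum; exact: H.
  by apply/forall_inP => k kS; apply: H; rewrite mem_enum.
exact: meas_all.
Qed.

Lemma buys_meas (R : realType) d (Omega : measurableType d) m
  (v : Omega -> 'I_m -> R) (vm : forall j, measurable_fun setT (fun w => v w j))
  (q : pricing R m) S j : measurable [set w | buys (v w) q S j].
Proof.
have mE k : measurable_fun setT (fun w => (v w k)%:E - q k)%E.
  apply: emeasurable_funB; last exact: measurable_cst.
  exact/measurable_EFinP.
have mf : measurable_fun setT (fun w => buys (v w) q S j).
  rewrite /buys; apply: measurable_and; first exact: measurable_cst.
  apply: measurable_and; first by apply: measurable_fun_lee => //; exact: measurable_cst.
  apply: measurable_and; apply: meas_forall => k.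
    exact: measurable_fun_lee.
  case: (k < j)%N => /=; last exact: measurable_cst.
  exact: measurable_fun_lte.
have := mf measurableT [set true] I.
by rewrite setTI.
Qed.

Lemma xprob_ge0 (R : realType) d (Omega : measurableType d) (P : probability Omega R) m
  (v : Omega -> 'I_m -> R) q S j : 0 <= xprob P v q S j.
Proof. by apply: fine_ge0; exact: measure_ge0. Qed.

Lemma xprob_mono (R : realType) d (Omega : measurableType d) (P : probability Omega R) m
  (v : Omega -> 'I_m -> R) (vm : forall j, measurable_fun setT (fun w => v w j))
  q q' S j : (forall w, buys (v w) q' S j -> buys (v w) q S j) ->
  xprob P v q' S j <= xprob P v q S j.
Proof.
move=> H; rewrite /xprob; apply: fine_le; try exact: fin_num_measure (buys_meas vm _ _ _).
by apply: le_measure; rewrite ?inE; [exact: buys_meas|exact: buys_meas|move=> w /= /H].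
Qed.

Lemma Rev_pT (R : realType) d (Omega : measurableType d) (P : probability Omega R) m
  (v : Omega -> 'I_m -> R) (vm : forall j, measurable_fun setT (fun w => v w j))
  (p : 'I_m -> R) (p0 : forall j, 0 <= p j) T S :
  Rev P v (pT p T) S = \sum_(j < m) p j * xprob P v (pT p T) S j.
Proof.
pose A j := [set w | buys (v w) (pT p T) S j].
have mA j : measurable (A j) by exact: buys_meas.
have E w : (payment (v w) (pT p T) S)%:E =
    \sum_(j < m) ((p j)%:E * (\1_(A j) w)%:E)%E.
  rewrite /payment -sumEFin; apply: eq_bigr => j _.
  rewrite indicE -EFinM; congr (_%:E).
  case: (boolP (buys (v w) (pT p T) S j)) => h.
    have jT := buys_in h.
    by rewrite mem_set // /pT jT /= mulr1.
  by rewrite memNset ?mulr0 //; apply/negP.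
rewrite /Rev; under eq_integral => w _ do rewrite E.
rewrite ge0_integral_sum //; last first.
- by move=> j w _; apply: mule_ge0; rewrite lee_fin ?indicE //.
- move=> j; apply: measurable_funeM; apply/measurable_EFinP.
  exact: measurable_indic.
have -> : (\sum_(j < m) p j * xprob P v (pT p T) S j) = fine (\sum_(j < m) (p j * xprob P v (pT p T) S j)%:E)%E by rewrite sumEFin.
congr fine; apply: eq_bigr => j _.
rewrite ge0_integralZl_EFin //.
rewrite integral_indic // setIT EFinM /xprob fineK //.
- by apply: fin_num_measure; exact: mA.
- by apply/measurable_EFinP; exact: measurable_indic.
Qed.
Lemma decomp (R : realFieldType) m (f : {set 'I_m} -> 'I_m -> R)
 (fge0 : forall T j, 0 <= f T j)
 (f0 : forall (T : {set 'I_m}) j, j \notin T -> f T j = 0)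
 (fmono : forall (T T' : {set 'I_m}) j, T \subset T' -> j \in T -> f T' j <= f T j) :
 forall U (z : 'I_m -> R), (forall j, 0 <= z j <= f U j) ->
 exists w : {set 'I_m} -> R, (forall T, 0 <= w T) /\ \sum_T w T = 1 /\
   forall j, \sum_T w T * f T j = z j.
Proof.
move=> U z; move: {2}#|U| (leqnn #|U|) => n; elim: n U z => [|n IH] U z hU hz.
- exists (fun T => (T == U)%:R); split; first by move=> T; case: eqP.
  split; first by rewrite (bigD1 U) //= eqxx big1 ?addr0 // => T /negbTE ->.
  move=> j; rewrite (bigD1 U) //= eqxx big1 ?addr0 ?mul1r; last first.
    by move=> T /negbTE ->; rewrite mul0r.
  move: hU; rewrite leqn0 cards_eq0 => /eqP U0; subst U.
  have fj : f finset.set0 j = 0 by rewrite f0 // finset.in_set0.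
  have := hz j; rewrite fj => /andP [a b]; apply/eqP; rewrite eq_le b a //.
case: (boolP [exists k in U, z k < f U k]) => [/existsP [k0 /andP [k0U zk0]]|hn].
  pose r j := if 0 < f U j then z j / f U j else 1.
  have [k kU kmin] : exists2 k, k \in U & forall j, j \in U -> r k <= r j.
    by case: (@arg_minP _ _ _ k0 (mem U) r k0U) => k kU kmin; exists k.
  pose t := r k.
  have fk0 : 0 < f U k0 by have /andP [a _] := hz k0; exact: le_lt_trans a zk0.
  have rk0 : r k0 < 1 by rewrite /r fk0 ltr_pdivrMr // mul1r.
  have t1 : t < 1 := le_lt_trans (kmin k0 k0U) rk0.
  have r_ge0 j : 0 <= r j.
    rewrite /r; case: ifP => // h; have /andP [a _] := hz j.
    by apply: divr_ge0 => //; exact: ltW.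
  have t0 : 0 <= t := r_ge0 k.
  have fk : 0 < f U k.
    apply/negPn/negP => h; move: t1; rewrite /t /r (negbTE h) ltxx //.
  have zk : z k = t * f U k by rewrite /t /r fk divfK // gt_eqF.
  have tle j : j \in U -> t * f U j <= z j.
    move=> jU; case: (ltrP 0 (f U j)) => h.
      by have := kmin j jU; rewrite /r h ler_pdivlMr.
    have -> : f U j = 0 by apply/eqP; rewrite eq_le h fge0.
    by rewrite mulr0; have /andP [a _] := hz j.
  have t10 : 0 < 1 - t by rewrite subr_gt0.
  pose z' j := (z j - t * f U j) / (1 - t).
  have hU' : (#|U :\ k| <= n)%N.
    by move: hU; rewrite (cardsD1 k U) kU add1n ltnS.
  have hz' : forall j, 0 <= z' j <= f (U :\ k) j.
    move=> j; case: (boolP (j \in U)) => jU; last first.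
      have fj : f U j = 0 by rewrite f0.
      have zj : z j = 0 by have := hz j; rewrite fj => /andP [a b]; apply/eqP; rewrite eq_le a b.
      by rewrite /z' fj zj mulr0 subrr mul0r lexx fge0.
    case: (eqVneq j k) => [->|jk].
      by rewrite /z' zk subrr mul0r lexx fge0.
    have jU' : j \in U :\ k by rewrite !inE jk jU.
    have hm := fmono (U :\ k) U j (finset.subsetDl _ _) jU'.
    have /andP [a b] := hz j.
    apply/andP; split.
      by apply: divr_ge0; [rewrite subr_ge0; exact: tle|exact: ltW].
    rewrite ler_pdivrMr //.
    have hm' : 0 <= f (U :\ k) j - f U j by rewrite subr_ge0.
    have := mulr_ge0 (ltW t10) hm'.
    have := mulr_ge0 t0 (fge0 U j).
    move=> *; nra.
  have [w' [w'0 [w'1 w'z]]] := IH (U :\ k) z' hU' hz'.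
  exists (fun T => t * (T == U)%:R + (1 - t) * w' T); split.
    by move=> T; rewrite addr_ge0 // mulr_ge0 // ?ler0n ?(ltW t10).
  split.
    rewrite big_split /= -!mulr_sumr w'1 (bigD1 U) //= eqxx big1 ?addr0.
      by rewrite !mulr1 addrC subrK.
    by move=> T /negbTE ->.
  move=> j.
  under eq_bigr do rewrite mulrDl -mulrA -mulrA.
  rewrite big_split /= -!mulr_sumr w'z (bigD1 U) //= eqxx big1 ?addr0.
    by rewrite mul1r /z' [X in _ + X]mulrC divfK ?gt_eqF // addrC subrK.
  by move=> T /negbTE ->; rewrite mul0r.
exists (fun T => (T == U)%:R); split; first by move=> T; case: eqP.
split; first by rewrite (bigD1 U) //= eqxx big1 ?addr0 // => T /negbTE ->.
move=> j; rewrite (bigD1 U) //= eqxx big1 ?addr0 ?mul1r; last first.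
  by move=> T /negbTE ->; rewrite mul0r.
have [a b] := andP (hz j).
case: (boolP (j \in U)) => jU; last by rewrite (f0 _ _ jU); apply/eqP; rewrite eq_le a -(f0 _ _ jU) b.
apply/eqP; rewrite eq_le b andbT leNgt; apply/negP => lt.
by move/existsP: hn; apply; exists j; rewrite jU lt.
Qed.

Unset Implicit Arguments.

Theorem lemma1 (R : realType) (m : nat)
    (d : measure_display) (Omega : measurableType d) (P : probability Omega R)
    (v : Omega -> 'I_m -> R)
    (v_meas : forall j : 'I_m, measurable_fun setT (fun w => v w j))
    (v_ge0 : forall w (j : 'I_m), 0 <= v w j)
    (p : 'I_m -> R) (p_ge0 : forall j, 0 <= p j)
    (muS : {ffun {set 'I_m} -> R})
    (muS_ge0 : forall S, 0 <= muS S) (muS_sum1 : \sum_(S : {set 'I_m}) muS S = 1)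
    (y : 'I_m -> R)
    (y_ge0 : forall j, 0 <= y j) (y_sum : \sum_(j < m) y j <= 1)
    (y_le : forall j, y j <= \sum_(S : {set 'I_m})
                               muS S * xprob P v (fun i => (p i)%:E) S j) :
  exists (n : nat) (wq : 'I_n -> R) (q : 'I_n -> pricing R m),
    (forall i, 0 <= wq i) /\ \sum_(i < n) wq i = 1 /\
    (forall i, is_pricing (q i)) /\
    (forall j : 'I_m,
       \sum_(i < n) wq i * \sum_(S : {set 'I_m}) muS S * xprob P v (q i) S j
       = y j) /\
    \sum_(i < n) wq i * \sum_(S : {set 'I_m}) muS S * Rev P v (q i) S
      = \sum_(j < m) y j * p j.
Proof.
pose f (T : {set 'I_m}) j := \sum_(S : {set 'I_m}) muS S * xprob P v (pT p T) S j.
have fge0 T j : 0 <= f T j.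
  by apply: sumr_ge0 => S _; apply: mulr_ge0 => //; exact: xprob_ge0.
have f0 (T : {set 'I_m}) j : j \notin T -> f T j = 0.
  move=> jT; apply: big1 => S _.
  have -> : xprob P v (pT p T) S j = 0.
    rewrite /xprob; have -> : [set w | buys (v w) (pT p T) S j] = set0.
      apply/seteqP; split => w //=; by move=> /buys_in; rewrite (negbTE jT).
    by rewrite measure0.
  by rewrite mulr0.
have fmono (T T' : {set 'I_m}) j : T \subset T' -> j \in T -> f T' j <= f T j.
  move=> sub jT; apply: ler_sum => S _; apply: ler_wpM2l => //.
  by apply: xprob_mono => // w; exact: buys_mono.
have fT j : f [set: 'I_m]%SET j = \sum_S muS S * xprob P v (fun i => (p i)%:E) S j.
  rewrite /f; have -> : pT p [set: 'I_m]%SET = (fun i => (p i)%:E) by apply: funext => i; rewrite /pT finset.in_setT.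
  by [].
have hy j : 0 <= y j <= f [set: 'I_m]%SET j by rewrite y_ge0 fT y_le.
have [w [w0 [w1 wz]]] := decomp fge0 f0 fmono hy.
have re (F : {set 'I_m} -> R) :
    \sum_(i < #|{set 'I_m}|) F (enum_val i) = \sum_T F T.
  by rewrite -big_enum_val.
exists #|{set 'I_m}|, (fun i => w (enum_val i)), (fun i => pT p (enum_val i)).
split; first by move=> i.
split; first by rewrite re.
split.
  by move=> i j; rewrite /pT; case: ifP => _; rewrite ?lee_fin ?p_ge0 ?leey.
split.
  move=> j; transitivity (\sum_T w T * f T j); first by rewrite -re.
  exact: wz.
transitivity (\sum_T w T * \sum_S muS S * \sum_(j < m) p j * xprob P v (pT p T) S j).
  rewrite -re; apply: eq_bigr => i _; congr (_ * _); apply: eq_bigr => S _.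
  by rewrite Rev_pT.
transitivity (\sum_(j < m) p j * \sum_T w T * f T j); last first.
  by apply: eq_bigr => j _; rewrite wz mulrC.
pose F (T : {set 'I_m}) (S : {set 'I_m}) (j : 'I_m) :=
  w T * muS S * p j * xprob P v (pT p T) S j.
have -> : \sum_T w T * \sum_S muS S * \sum_(j < m) p j * xprob P v (pT p T) S j
    = \sum_T \sum_S \sum_(j < m) F T S j.
  apply: eq_bigr => T _; rewrite mulr_sumr; apply: eq_bigr => S _.
  rewrite mulrA mulr_sumr; apply: eq_bigr => j _; rewrite /F; ring.
have -> : \sum_(j < m) p j * \sum_T w T * f T j
    = \sum_(j < m) \sum_T \sum_S F T S j.
  apply: eq_bigr => j _; rewrite mulr_sumr; apply: eq_bigr => T _.
  rewrite /f mulr_sumr mulr_sumr; apply: eq_bigr => S _; rewrite /F; ring.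
symmetry; rewrite exchange_big /=; apply: eq_bigr => T _.
by rewrite exchange_big.
Qed.
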